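(* Let $E$ be a countable directed graph which is row-finite and has no sources, let $G$ be a discrete group acting on $E$ by graph automorphisms, and let $\varphi:G\times E^1\to G$ be a 1-cocycle with $\varphi(g,a)\cdot x=g\cdot x$ for all $g,a,x$. Then the following are equivalent: (1) for every $g\in G$ and every $x\in E^0$ there are only finitely many minimal strongly fixed paths for $g$ with range $x$; (2) the groupoid $\mathcal{G}_{\mathrm{tight}}^{(G,E)}$ is Hausdorff.
   Context: Conventions: paths $\alpha=\alpha_1\cdots\alpha_n$ with $s(\alpha_i)=r(\alpha_{i+1})$, $r(\alpha)=r(\alpha_1)$, $s(\alpha)=s(\alpha_n)$; row-finite without sources means $0<|r^{-1}(x)|<\infty$ for all vertices. 1-cocycle: $\varphi(gh,a)=\varphi(g,ha)\varphi(h,a)$; action and cocycle extend to finite paths by $g(a\alpha')=(ga)(\varphi(g,a)\alpha')$, $\varphi(g,a\alpha')=\varphi(\varphi(g,a),\alpha')$, and $\varphi(g,x)=g$ on vertices; $G$ acts on infinite paths analogously. A finite path $\alpha$ is strongly fixed by $g$ if $g\alpha=\alpha$ and $\varphi(g,\alpha)=1$; it is a minimal strongly fixed path for $g$ if moreover no proper prefix of $\alpha$ is strongly fixed by $g$. $\mathcal{G}_{\mathrm{tight}}^{(G,E)}$ is the groupoid of germs of the action of the inverse semigroup $\mathcal{S}_{G,E}=\{(\alpha,g,\beta):\alpha,\beta\in E^*,g\in G,s(\alpha)=g\,s(\beta)\}\cup\{0\}$ on its tight spectrum, which here is identified with the infinite path space $E^\infty$ (topology generated by cylinders $Z(\gamma)=\{\gamma\eta\}$),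 the action being $(\alpha,g,\beta)\cdot\beta\eta=\alpha(g\eta)$. Explicitly, its elements are germs $[\alpha,g,\beta;\xi]$ with $\xi\in Z(\beta)$, where $[s;\xi]=[t;\mu]$ iff $\xi=\mu$ and there is a nonzero idempotent $e=(\gamma,1,\gamma)$ with $e\cdot\xi=\xi$ and $se=te$ (products in $\mathcal{S}_{G,E}$: $(\alpha,g,\beta)(\gamma,h,\delta)$ equals $(\alpha,g\varphi(h,\varepsilon),\delta(h^{-1}\varepsilon))$ if $\beta=\gamma\varepsilon$, $(\alpha(g\varepsilon),\varphi(g,\varepsilon)h,\delta)$ if $\gamma=\beta\varepsilon$, $0$ otherwise); $s([\alpha,g,\beta;\beta\eta])=\beta\eta$, $r([\alpha,g,\beta;\beta\eta])=\alpha(g\eta)$; a basis of the topology is given by the sets $\{[\alpha,g,\beta;\xi]:\xi\in Z(\gamma)\}$. *)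

(* Defs.v *)
From HB Require Import structures.
From mathcomp Require Import all_boot.
From mathcomp Require Import boolp classical_sets cardinality.

Set Implicit Arguments.
Unset Strict Implicit.
Unset Printing Implicit Defensive.

Local Open Scope classical_set_scope.
Local Open Scope group_scope.

Section SelfSimilarGraph.
Variables (G : groupType) (V Ed : countType) (r s : Ed -> V).
Variables (actV : G -> V -> V) (actE : G -> Ed -> Ed) (phi : G -> Ed -> G).

Definition row_finite_no_sources : Prop :=
  forall x : V, finite_set [set e : Ed | r e = x] /\ [set e : Ed | r e = x] !=set0.

(* G acts on E by graph automorphisms (group actions on E^0 and E^1
   commuting with r and s; bijectivity follows from being group actions). *)
Definition graph_action : Prop :=
  (forall x, actV 1 x = x) /\
  (forall g h x, actV (g * h) x = actV g (actV h x)) /\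
  (forall a, actE 1 a = a) /\
  (forall g h a, actE (g * h) a = actE g (actE h a)) /\
  (forall g a, r (actE g a) = actV g (r a)) /\
  (forall g a, s (actE g a) = actV g (s a)).

Definition cocycle : Prop :=
  forall g h a, phi (g * h) a = phi g (actE h a) * phi h a.

Definition cocycle_vertex_cond : Prop :=
  forall g a x, actV (phi g a) x = actV g x.

(* A finite path is represented by its range vertex x and its list of edges
   [a1; ...; an] (n = 0 gives the vertex x itself), subject to
   r(a1) = x and s(a_i) = r(a_{i+1}). *)
Definition fpath := (V * seq Ed)%type.

Fixpoint chain (x : V) (l : seq Ed) : bool :=
  if l is a :: l' then (r a == x) && chain (s a) l' else true.

Definition ok_path (p : fpath) : bool := chain p.1 p.2.

Definition fp_r (p : fpath) : V := p.1.
Definition fp_s (p : fpath) : V := last p.1 (map s p.2).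
Definition fp_len (p : fpath) : nat := size p.2.

(* concatenation alpha beta (meaningful when s(alpha) = r(beta)) *)
Definition fp_cat (p q : fpath) : fpath := (p.1, p.2 ++ q.2).

Fixpoint act_seq (g : G) (l : seq Ed) : seq Ed :=
  if l is a :: l' then actE g a :: act_seq (phi g a) l' else [::].

Fixpoint phi_seq (g : G) (l : seq Ed) : G :=
  if l is a :: l' then phi_seq (phi g a) l' else g.

Definition act_path (g : G) (p : fpath) : fpath := (actV g p.1, act_seq g p.2).
Definition phi_path (g : G) (p : fpath) : G := phi_seq g p.2.

Definition strongly_fixed (g : G) (p : fpath) : Prop :=
  act_path g p = p /\ phi_path g p = 1.

Definition minimal_strongly_fixed (g : G) (p : fpath) : Prop :=
  ok_path p /\ strongly_fixed g p /\
  (forall k, (k < size p.2)%N -> ~ strongly_fixed g (p.1, take k p.2)).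

Definition ipath := nat -> Ed.

Definition ok_ipath (xi : ipath) : Prop := forall n, s (xi n) = r (xi n.+1).

Definition inZ (p : fpath) (xi : ipath) : Prop :=
  r (xi 0%N) = p.1 /\ forall i, (i < size p.2)%N -> xi i = nth (xi i) p.2 i.

(* action of g on an infinite path: (g eta)_n = g_n(eta_n), g_0 = g,
   g_{n+1} = phi(g_n, eta_n) *)
Definition act_ipath (g : G) (eta : ipath) : ipath :=
  fun n => actE (phi_seq g (mkseq eta n)) (eta n).

(* action of (alpha, g, beta) on beta eta : alpha (g eta) *)
Definition sact (a : fpath) (g : G) (b : fpath) (xi : ipath) : ipath :=
  let eta := fun n => xi (n + size b.2)%N in
  fun n => if (n < size a.2)%N then nth (xi n) a.2 n
           else act_ipath g eta (n - size a.2)%N.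

(* nonzero elements (alpha, g, beta); 0 is represented by None *)
Definition selem := (fpath * G * fpath)%type.

Definition ok_selem (t : selem) : Prop :=
  let: (a, g, b) := t in ok_path a /\ ok_path b /\ fp_s a = actV g (fp_s b).

Definition is_prefix (p q : fpath) : bool := (p.1 == q.1) && prefix p.2 q.2.

Definition smul (t u : selem) : option selem :=
  let: (a, g, b) := t in
  let: (c, h, d) := u in
  if is_prefix c b then
    let eps := (fp_s c, drop (size c.2) b.2) in
    Some (a, g * phi_path h eps, fp_cat d (act_path h^-1 eps))
  else if is_prefix b c then
    let eps := (fp_s b, drop (size b.2) c.2) in
    Some (fp_cat a (act_path g eps), phi_path g eps * h, d)
  else None.

(* a germ [alpha, g, beta; xi] is represented by the quadruple; germs are
   equivalence classes of valid quadruples under germ_eq *)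
Definition grep := (selem * ipath)%type.

Definition valid_grep (t : grep) : Prop :=
  ok_selem t.1 /\ ok_ipath t.2 /\ inZ t.1.2 t.2.

(* [s;xi] = [t;mu] iff xi = mu and there is a nonzero idempotent
   e = (gamma,1,gamma) with e xi = xi and s e = t e *)
Definition germ_eq (t u : grep) : Prop :=
  t.2 = u.2 /\
  exists gam : fpath, ok_path gam /\ inZ gam t.2 /\
    sact gam 1 gam t.2 = t.2 /\
    smul t.1 (gam, 1, gam) = smul u.1 (gam, 1, gam).

(* basic open set {[alpha, g, beta; xi] : xi in Z(gamma)}, as a saturated
   set of representatives *)
Definition basic_set (st : selem) (gam : fpath) : set grep :=
  [set t | valid_grep t /\
     exists xi : ipath, valid_grep (st, xi) /\ inZ gam xi /\ germ_eq t (st, xi)].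

Definition gopen (U : set grep) : Prop :=
  U `<=` valid_grep /\
  forall t, U t -> exists (st : selem) (gam : fpath),
      ok_selem st /\ ok_path gam /\ basic_set st gam t /\ basic_set st gam `<=` U.

Definition tight_groupoid_hausdorff : Prop :=
  forall t u : grep, valid_grep t -> valid_grep u -> ~ germ_eq t u ->
    exists U W : set grep, [/\ gopen U, gopen W, U t, W u & U `&` W = set0].

Definition finitely_many_minimal_strongly_fixed : Prop :=
  forall (g : G) (x : V),
    finite_set [set p : fpath | fp_r p = x /\ minimal_strongly_fixed g p].

End SelfSimilarGraph.

(* Main.v *)
Require Import Defs.
From mathcomp Require Import all_boot.
From mathcomp Require Import boolp classical_sets cardinality.
From mathcomp Require Import zify.

Set Implicit Arguments.
Unset Strict Implicit.
Unset Printing Implicit Defensive.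

Section Pf.
Variables (G : groupType) (V Ed : countType) (r s : Ed -> V).
Variables (actV : G -> V -> V) (actE : G -> Ed -> Ed) (phi : G -> Ed -> G).
Hypothesis Hrf : row_finite_no_sources r.
Hypothesis Hga : graph_action r s actV actE.
Hypothesis Hco : cocycle actE phi.
Hypothesis Hcv : cocycle_vertex_cond actV phi.

Local Open Scope group_scope.

Local Notation aseq := (act_seq actE phi).
Local Notation pseq := (phi_seq phi).

Lemma actV1 x : actV 1 x = x. Proof. by case: Hga. Qed.
Lemma actVM g h x : actV (g * h) x = actV g (actV h x). Proof. by case: Hga => _ []. Qed.
Lemma actE1 a : actE 1 a = a. Proof. by case: Hga => _ [_ []]. Qed.
Lemma actEM g h a : actE (g * h) a = actE g (actE h a). Proof. by case: Hga => _ [_ [_ []]]. Qed.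
Lemma r_actE g a : r (actE g a) = actV g (r a). Proof. by case: Hga => _ [_ [_ [_ []]]]. Qed.

Lemma phi1 a : phi 1 a = 1.
Proof.
have := Hco 1 1 a; rewrite mulg1 actE1 => H.
have : phi 1 a * phi 1 a = phi 1 a * 1 by rewrite mulg1 -H.
by move/mulgI.
Qed.

Lemma aseq1 l : aseq 1 l = l.
Proof. by elim: l => //= a l IH; rewrite actE1 phi1 IH. Qed.
Lemma pseq1 l : pseq 1 l = 1.
Proof. by elim: l => //= a l IH; rewrite phi1 IH. Qed.
Lemma aseq_cat g l1 l2 : aseq g (l1 ++ l2) = aseq g l1 ++ aseq (pseq g l1) l2.
Proof. by elim: l1 g => //= a l1 IH g; rewrite IH. Qed.
Lemma pseq_cat g l1 l2 : pseq g (l1 ++ l2) = pseq (pseq g l1) l2.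
Proof. by elim: l1 g => //= a l1 IH g; rewrite IH. Qed.
Lemma size_aseq g l : size (aseq g l) = size l.
Proof. by elim: l g => //= a l IH g; rewrite IH. Qed.
Lemma aseqM_pseqM l : forall g h,
  aseq (g * h) l = aseq g (aseq h l) /\ pseq (g * h) l = pseq g (aseq h l) * pseq h l.
Proof.
elim: l => //= a l IH g h; rewrite actEM Hco.
by case: (IH (phi g (actE h a)) (phi h a)) => -> ->.
Qed.
Lemma aseqM g h l : aseq (g * h) l = aseq g (aseq h l).
Proof. by case: (aseqM_pseqM l g h). Qed.
Lemma pseqM g h l : pseq (g * h) l = pseq g (aseq h l) * pseq h l.
Proof. by case: (aseqM_pseqM l g h). Qed.
Lemma actV_pseq g l y : actV (pseq g l) y = actV g y.
Proof. by elim: l g => //= a l IH g; rewrite IH Hcv. Qed.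

Definition seg (z : ipath Ed) i n := map z (iota i n).

Lemma size_seg z i n : size (seg z i n) = n.
Proof. by rewrite size_map size_iota. Qed.
Lemma seg_split z i j k : (i <= j)%N -> (j <= k)%N ->
  seg z i (k - i) = seg z i (j - i) ++ seg z j (k - j).
Proof.
move=> ij jk; rewrite /seg -map_cat.
have -> : (k - i = (j - i) + (k - j))%N by lia.
by rewrite iotaD subnKC.
Qed.
Lemma seg_agree z z' i n : (forall x, (x < i + n)%N -> z x = z' x) -> seg z i n = seg z' i n.
Proof.
move=> H; apply/eq_in_map => x; rewrite mem_iota => /andP [_ xl]; exact: H.
Qed.
Lemma nth_seg d z i n k : (k < n)%N -> nth d (seg z i n) k = z (i + k)%N.
Proof. by move=> kn; rewrite (nth_map 0%N) ?size_iota // nth_iota. Qed.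
Lemma take_seg z i n j : (j <= n)%N -> take j (seg z i n) = seg z i j.
Proof. by move=> jn; rewrite /seg -map_take take_iota (minn_idPl jn). Qed.
Lemma segS z i n : seg z i n.+1 = z i :: seg z i.+1 n.
Proof. by []. Qed.

Lemma chain_seg z : ok_ipath r s z -> forall n i, chain r s (r (z i)) (seg z i n).
Proof.
move=> ok; elim => // n IH i; rewrite segS /= eqxx /=.
by rewrite ok; exact: IH.
Qed.

Lemma chain_cat x l1 l2 :
  chain r s x (l1 ++ l2) = chain r s x l1 && chain r s (last x (map s l1)) l2.
Proof. by elim: l1 x => //= a l1 IH x; rewrite IH andbA. Qed.


Definition pre (z : ipath Ed) q : Defs.fpath V Ed := (r (z 0%N), seg z 0 q).
Definition lev (T : selem G V Ed) z q := smul s actV actE phi T (pre z q, 1, pre z q).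

Lemma seg0_split z n q : (n <= q)%N -> seg z 0 q = seg z 0 n ++ seg z n (q - n).
Proof. by move=> nq; have := seg_split z (leq0n n) nq; rewrite !subn0. Qed.

Lemma inZ_pre p z : inZ r p z -> p = (r (z 0%N), seg z 0 (size p.2)).
Proof.
case: p => p1 p2 [/= H0 H]; rewrite H0; congr pair.
apply: (@eq_from_nth _ (z 0%N)); rewrite ?size_seg // => i ip.
by rewrite nth_seg // add0n (set_nth_default (z i)) // -H.
Qed.

Lemma pre_inZ z q : inZ r (pre z q) z.
Proof. by split => //= i; rewrite size_seg => iq; rewrite nth_seg. Qed.

Lemma inZ_agree p z z' : inZ r p z -> (forall i, (i <= size p.2)%N -> z i = z' i) -> inZ r p z'.
Proof.
move=> /inZ_pre E H; rewrite E.
have -> : r (z 0%N) = r (z' 0%N) by rewrite H.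
rewrite (@seg_agree z z'); first exact: pre_inZ.
by move=> x; rewrite add0n => xl; apply: H; rewrite ltnW.
Qed.

Lemma inZ_at z n z' : inZ r (pre z n) z' -> forall i, (i < n)%N -> z' i = z i.
Proof.
move=> /inZ_pre [_]; rewrite size_seg => E i iq.
by rewrite -(nth_seg (z 0%N) z' 0 iq) -E nth_seg.
Qed.

Lemma sact_id gam z : inZ r gam z -> sact actE phi gam 1 gam z = z.
Proof.
move=> inz; apply: funext => n; rewrite /sact; case: ifP => nl.
  by case: gam inz nl => g1 g2 [_ H] /= nl; rewrite -H.
by rewrite /act_ipath pseq1 actE1 subnK // leqNgt nl.
Qed.

Lemma germ_eqP (t u : grep G V Ed) : valid_grep r s actV t ->
  germ_eq r s actV actE phi t u <-> t.2 = u.2 /\ exists q, lev t.1 t.2 q = lev u.1 t.2 q.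
Proof.
move=> [_ [okt _]]; rewrite /germ_eq; split.
  move=> [e [gam [okg [inz [_ E]]]]]. split; first by []. exists (size gam.2).
  by rewrite /lev /pre -(inZ_pre inz).
case=> e [q E]; split => //; exists (pre t.2 q); split; first exact: chain_seg.
split; first exact: pre_inZ.
split; first exact: sact_id (pre_inZ _ _).
exact: E.
Qed.

Lemma levF' a g n z q : (n <= q)%N ->
  lev (a, g, (r (z 0%N), seg z 0 n)) z q =
  Some ((a.1, a.2 ++ aseq g (seg z n (q - n))), pseq g (seg z n (q - n)), pre z q).
Proof.
move=> nq; rewrite /lev /pre /smul /is_prefix /= eqxx /=.
rewrite (seg0_split z nq); case E: (seg z n (q - n)) => [|e W].
  by rewrite cats0 prefix_refl drop_size /phi_path /fp_cat /act_path /= !cats0 mulg1; case: a.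
have -> : prefix (seg z 0 n ++ e :: W) (seg z 0 n) = false.
  apply/negbTE/negP => /size_prefix; rewrite size_cat /= => H.
  by move: H; rewrite -[X in (_ <= X)%N]addn0 leq_add2l.
by rewrite prefix_prefix drop_size_cat //= mulg1.
Qed.

Lemma levF a g b z q : inZ r b z -> (size b.2 <= q)%N ->
  lev (a, g, b) z q =
  Some ((a.1, a.2 ++ aseq g (seg z (size b.2) (q - size b.2))),
        pseq g (seg z (size b.2) (q - size b.2)), pre z q).
Proof.
move=> /inZ_pre E; rewrite [in lev _ _ _]E; move: (size b.2) => n nq.
exact: levF'.
Qed.

Lemma levS a g b z q : inZ r b z -> (q < size b.2)%N ->
  lev (a, g, b) z q = Some (a, g, (r (z 0%N), b.2)).
Proof.
move=> /inZ_pre E; rewrite [in lev _ _ _]E [in RHS]E /=; move: (size b.2) => n qn.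
rewrite /lev /pre /smul /is_prefix /= eqxx /=.
rewrite (seg0_split z (ltnW qn)) prefix_prefix drop_size_cat //=.
by rewrite invg1 /phi_path /fp_cat /act_path /= aseq1 pseq1 mulg1.
Qed.

Lemma lev_local T z z' q : r (z 0%N) = r (z' 0%N) -> (forall i, (i < q)%N -> z i = z' i) ->
  lev T z q = lev T z' q.
Proof.
move=> H0 H; rewrite /lev /pre H0 (@seg_agree z z') // => x; rewrite add0n; exact: H.
Qed.

Lemma lev_up a g b c h d z p q : inZ r b z -> inZ r d z ->
  lev (a, g, b) z p = lev (c, h, d) z p -> (p <= q)%N ->
  lev (a, g, b) z q = lev (c, h, d) z q.
Proof.
move=> ib idd E pq.
case: (leqP (size b.2) p) => bp; case: (leqP (size d.2) p) => dp.
- move: E; rewrite (levF _ _ ib bp) (levF _ _ idd dp).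
  rewrite (levF _ _ ib (leq_trans bp pq)) (levF _ _ idd (leq_trans dp pq)).
  rewrite (seg_split z bp pq) (seg_split z dp pq) !aseq_cat !pseq_cat !catA.
  by case=> -> -> ->.
- move: E; rewrite (levF _ _ ib bp) (levS _ _ idd dp) => -[] _ _ /(congr1 size).
  by rewrite size_seg => E; move: dp; rewrite -E ltnn.
- move: E; rewrite (levS _ _ ib bp) (levF _ _ idd dp) => -[] _ _ /(congr1 size).
  by rewrite size_seg => E; move: bp; rewrite E ltnn.
- move: E; rewrite (levS _ _ ib bp) (levS _ _ idd dp) => -[] -> -> E.
  have -> : b = d by rewrite (inZ_pre ib) (inZ_pre idd) E.
  by [].
Qed.


Lemma lev_split a g b c h d z M m : inZ r b z -> inZ r d z ->
  (size b.2 <= M)%N -> (size d.2 <= M)%N -> (M <= m)%N ->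
  (lev (a, g, b) z m = lev (c, h, d) z m <->
   [/\ a.1 = c.1,
       a.2 ++ aseq g (seg z (size b.2) (M - size b.2)) =
       c.2 ++ aseq h (seg z (size d.2) (M - size d.2)),
       aseq (pseq g (seg z (size b.2) (M - size b.2))) (seg z M (m - M)) =
       aseq (pseq h (seg z (size d.2) (M - size d.2))) (seg z M (m - M)) &
       pseq (pseq g (seg z (size b.2) (M - size b.2))) (seg z M (m - M)) =
       pseq (pseq h (seg z (size d.2) (M - size d.2))) (seg z M (m - M))]).
Proof.
move=> ib idd bM dM Mm.
rewrite (levF _ _ ib (leq_trans bM Mm)) (levF _ _ idd (leq_trans dM Mm)).
rewrite (seg_split z bM Mm) (seg_split z dM Mm) !aseq_cat !pseq_cat; split.
  case=> E1 E2 E3.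
  have sz : size (a.2 ++ aseq g (seg z (size b.2) (M - size b.2))) =
            size (c.2 ++ aseq h (seg z (size d.2) (M - size d.2))).
    move: (congr1 size E2); rewrite !catA !size_cat !size_aseq.
    by move/addIn.
  move: E2; rewrite !catA => /eqP; rewrite eqseq_cat // => /andP [/eqP E2 /eqP E4].
  by split.
by case=> -> E2 E3 E4; rewrite !catA E2 E3 E4.
Qed.

Lemma sf_of g' h' W e W' : aseq g' W = aseq h' W -> pseq g' W = pseq h' W -> W = e :: W' ->
  strongly_fixed actV actE phi (h'^-1 * g') (r e, W).
Proof.
move=> E1 E2 EW; split.
  rewrite /act_path /= aseqM E1 -aseqM mulVg aseq1; congr pair.
  have : actE g' e = actE h' e by move: E1; rewrite EW /= => -[].
  move/(congr1 r); rewrite !r_actE => E.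
  by rewrite actVM E -actVM mulVg actV1.
by rewrite /phi_path /= pseqM E1 E2 -pseqM mulVg pseq1.
Qed.

Lemma sf_to g' h' y W : strongly_fixed actV actE phi (h'^-1 * g') (y, W) ->
  aseq g' W = aseq h' W /\ pseq g' W = pseq h' W.
Proof.
move=> [E1 E2]; have Eg : g' = h' * (h'^-1 * g') by rewrite mulgA mulgV mul1g.
have EA : aseq (h'^-1 * g') W = W by move: (congr1 snd E1).
have EP : pseq (h'^-1 * g') W = 1 by exact: E2.
by rewrite Eg aseqM pseqM EA EP mulg1.
Qed.

Lemma exists_msf k p : ok_path r s p -> strongly_fixed actV actE phi k p ->
  exists j, (j <= size p.2)%N /\ minimal_strongly_fixed r s actV actE phi k (p.1, take j p.2).
Proof.
move=> okp sfp.
pose P j := `[< (j <= size p.2)%N /\ strongly_fixed actV actE phi k (p.1, take j p.2) >].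
have exP : exists j, P j.
  exists (size p.2); apply/asboolP; split => //; by rewrite take_size -surjective_pairing.
case: (ex_minnP exP) => j /asboolP [jl sfj] jmin.
exists j; split => //; split.
  move: okp; rewrite /ok_path /= -{1}(cat_take_drop j p.2) chain_cat.
  by case/andP.
split => // k' /=; rewrite size_takel // => kj sfk.
have : P k'.
  apply/asboolP; move: sfk; rewrite (take_takel _ (ltnW kj)) => sfk; split => //.
  by rewrite (leq_trans (ltnW kj) jl).
by move/jmin; rewrite leqNgt kj.
Qed.


Lemma fin_bound (A : set (Defs.fpath V Ed)) : finite_set A ->
  exists L, forall p, A p -> (size p.2 <= L)%N.
Proof.
case/finite_fsetP => X ->.
exists (\max_(p <- finmap.enum_fset X) size p.2)%N => p Xp.
by apply: (@leq_bigmax_seq _ _ _ (fun p : Defs.fpath V Ed => size p.2)).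
Qed.


Local Open Scope classical_set_scope.

Lemma ok_pre z q : ok_ipath r s z -> ok_path r s (pre z q).
Proof. by move=> ok; exact: (chain_seg ok q 0). Qed.

Lemma gopen_basic st gam : ok_selem r s actV st -> ok_path r s gam ->
  gopen r s actV actE phi (basic_set r s actV actE phi st gam).
Proof.
move=> ost og; split; first by move=> t [].
move=> t Ut; exists st, gam; split => //; split => //; split => //.
Qed.

Lemma mem_basic (t : grep G V Ed) n : valid_grep r s actV t ->
  basic_set r s actV actE phi t.1 (pre t.2 n) t.
Proof.
move=> vt; split => //; exists t.2; split; first by rewrite -surjective_pairing.
split; first exact: pre_inZ.
by apply/germ_eqP => //; split => //; exists 0%N.
Qed.

Lemma basic_elim st gam v : basic_set r s actV actE phi st gam v ->
  valid_grep r s actV v /\ exists xi, valid_grep r s actV (st, xi) /\ inZ r gam xi /\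
    v.2 = xi /\ exists q, lev v.1 xi q = lev st xi q.
Proof.
case=> vv [xi [vs [ig ge]]]; split => //; exists xi; do 2!split => //.
case: ((germ_eqP _ vv).1 ge) => /= e [q E]; split => //; exists q; by rewrite -e.
Qed.

Lemma dir12 : finitely_many_minimal_strongly_fixed r s actV actE phi ->
  tight_groupoid_hausdorff r s actV actE phi.
Proof.
move=> Hfin [T xi] [S mu] vt vu ngu.
case: (pselect (xi = mu)) => [exm | nxm]; last first.
  have [i ni] : exists i, xi i <> mu i.
    apply: contrapT => H; apply: nxm; apply: funext => i.
    apply: contrapT => ni; apply: H; by exists i.
  exists (basic_set r s actV actE phi T (pre xi i.+1)),
         (basic_set r s actV actE phi S (pre mu i.+1)); split.
  - apply: gopen_basic; [exact: vt.1 | exact: ok_pre vt.2.1].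
  - apply: gopen_basic; [exact: vu.1 | exact: ok_pre vu.2.1].
  - exact: (mem_basic (t := (T, xi))).
  - exact: (mem_basic (t := (S, mu))).
  rewrite -subset0 => v [/basic_elim [_ [x1 [_ [i1 [e1 _]]]]] /basic_elim [_ [x2 [_ [i2 [e2 _]]]]]].
  apply: ni; rewrite -(inZ_at i1 (ltnSn i)) -(inZ_at i2 (ltnSn i)) -e1 -e2 //.
subst mu.
case: T vt ngu => [[a g] b] vt ngu; case: S vu ngu => [[c h] d] vu ngu.
have ib : inZ r b xi := vt.2.2.
have idd : inZ r d xi := vu.2.2.
pose M := maxn (size b.2) (size d.2).
have bM : (size b.2 <= M)%N := leq_maxl _ _.
have dM : (size d.2 <= M)%N := leq_maxr _ _.
pose gM := pseq g (seg xi (size b.2) (M - size b.2)).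
pose hM := pseq h (seg xi (size d.2) (M - size d.2)).
pose k := hM^-1 * gM.
pose x := r (xi M).
have [L HL] := fin_bound (Hfin k x).
pose N := (M + L).+1.
exists (basic_set r s actV actE phi (a, g, b) (pre xi N)),
       (basic_set r s actV actE phi (c, h, d) (pre xi N)); split.
- apply: gopen_basic; [exact: vt.1 | exact: ok_pre vt.2.1].
- apply: gopen_basic; [exact: vu.1 | exact: ok_pre vu.2.1].
- exact: (mem_basic (t := (_, xi))).
- exact: (mem_basic (t := (_, xi))).
rewrite -subset0 => v [/basic_elim [vv [x1 [v1 [i1 [e1 [p1 E1]]]]]]
                       /basic_elim [_ [x2 [v2 [i2 [e2 [p2 E2]]]]]]].
subst x1 x2.
move: (v.2) v1 v2 i1 i2 E1 E2 (vv.2.2) => zeta v1 v2 i1 i2 E1 E2 ivz.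
have ag := inZ_at i1.
have ibz : inZ r b zeta := v1.2.2.
have idz : inZ r d zeta := v2.2.2.
have okz : ok_ipath r s zeta := v1.2.1.
pose m := maxn (maxn p1 p2) N.
have p1m : (p1 <= m)%N by rewrite /m; lia.
have p2m : (p2 <= m)%N by rewrite /m; lia.
have MN : (M < N)%N by rewrite /N; lia.
have Nm : (N <= m)%N by rewrite /m; lia.
have Em : lev (a, g, b) zeta m = lev (c, h, d) zeta m.
  move: E1 E2 ivz; case: (v.1) => [[a' g'] b'] E1 E2 ivz.
  by rewrite -(lev_up ivz ibz E1 p1m) (lev_up ivz idz E2 p2m).
have Mm : (M <= m)%N by lia.
case/(lev_split _ _ _ _ ibz idz bM dM Mm): Em => e1 e2 e3 e4.
have sb : seg zeta (size b.2) (M - size b.2) = seg xi (size b.2) (M - size b.2).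
  by apply: seg_agree => y yl; apply: ag; lia.
have sd : seg zeta (size d.2) (M - size d.2) = seg xi (size d.2) (M - size d.2).
  by apply: seg_agree => y yl; apply: ag; lia.
rewrite sb sd -/gM -/hM in e2 e3 e4.
have EW : seg zeta M (m - M) = zeta M :: seg zeta M.+1 (m - M).-1.
  by rewrite -segS prednK // subn_gt0; lia.
have sfW := sf_of e3 e4 EW.
have xz : r (zeta M) = x by rewrite /x ag.
rewrite xz in sfW.
have okW : ok_path r s (x, seg zeta M (m - M)).
  by rewrite /ok_path /= -xz; exact: chain_seg.
have [j [jl msf]] := exists_msf okW sfW.
move: jl msf; rewrite /= size_seg => jl msf.
have jL : (j <= L)%N.
  by have := HL (x, take j (seg zeta M (m - M))) (conj erefl msf); rewrite /= size_takel ?size_seg.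
have Ej : take j (seg zeta M (m - M)) = seg xi M j.
  rewrite take_seg //; apply: seg_agree => y yl; apply: ag; lia.
rewrite Ej in msf.
have [f1 f2] := sf_to msf.2.1.
apply: ngu; apply/germ_eqP => //; split => //=; exists (M + j)%N.
apply/(lev_split _ _ _ _ ib idd bM dM (leq_addr j M)).
by rewrite addKn; split.
Qed.


Lemma chain_nth x l d n : chain r s x l -> (n.+1 < size l)%N ->
  s (nth d l n) = r (nth d l n.+1).
Proof.
elim: l x n => [|a l IH] x [|n] //= /andP [_ H] lt.
  by case: l IH H lt => [|b l'] // _ /andP [/eqP -> _].
exact: IH H lt.
Qed.

Lemma ext_path x l : chain r s x l ->
  exists zeta, ok_ipath r s zeta /\ r (zeta 0%N) = x /\ seg zeta 0 (size l) = l.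
Proof.
move=> cl.
pose nx v := proj1_sig (cid ((Hrf v).2)).
have nxP : forall v, r (nx v) = v by move=> v; exact: (proj2_sig (cid ((Hrf v).2))).
pose y := last x (map s l).
pose f := fix f (n : nat) : Ed := if n is n'.+1 then nx (s (f n')) else nx y.
pose zeta i := if (i < size l)%N then nth (nx x) l i else f (i - size l)%N.
exists zeta; split; last split.
- move=> n; rewrite /zeta.
  case: (ltnP n.+1 (size l)) => h1.
    by rewrite (ltnW h1) (@chain_nth x l (nx x) n cl h1).
  case: (ltnP n (size l)) => h2.
    have e : size l = n.+1 by apply/eqP; rewrite eqn_leq h1 h2.
    rewrite e subnn /= nxP /y.
    case: l cl e {h1 h2 y zeta f} => [|a l] //= cl [e].
    rewrite last_map -e -[last a l]/(last a (a :: l)) -nth_last /=.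
    by rewrite (set_nth_default a).
  by rewrite subSn // /= nxP.
- rewrite /zeta /f /y; case: l cl {zeta f y} => [|a l] /=; first by rewrite nxP.
  by case/andP => /eqP.
- apply: (@eq_from_nth _ (nx x)); rewrite ?size_seg // => i il.
  by rewrite nth_seg // /zeta add0n il.
Qed.


Lemma dir21 : tight_groupoid_hausdorff r s actV actE phi ->
  finitely_many_minimal_strongly_fixed r s actV actE phi.
Proof.
move=> Haus g x; apply: contrapT => Hinf.
have [e0 _] := (Hrf x).2.
pose F := [set p : Defs.fpath V Ed | fp_r p = x /\ minimal_strongly_fixed r s actV actE phi g p].
pose Fl l := [set p | F p /\ exists rest, p.2 = l ++ rest].
pose P l := ~ finite_set (Fl l).
have P0 : P [::].
  move=> fin; apply: Hinf; apply: sub_finite_set fin => p Fp; split => //; by exists p.2.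
have Pext : forall l, P l -> exists p, Fl l p /\ (size l < size p.2)%N.
  move=> l Pl; apply: contrapT => H; apply: Pl.
  apply: (sub_finite_set _ (finite_set1 (x, l))) => p [[Fp1 Fp2] [rest ep]].
  case: rest ep => [|e rest] ep.
    by rewrite /set1 /= [p]surjective_pairing ep cats0 -Fp1.
  exfalso; apply: H; exists p; split; first by split => //; exists (e :: rest).
  by rewrite ep size_cat /= addnS ltnS leq_addr.
have Flchain : forall l p, Fl l p -> chain r s x l.
  move=> l p [[Fp1 [okp _]] [rest ep]].
  by move: okp; rewrite /ok_path ep -Fp1 chain_cat => /andP [].
have step : forall l, P l -> exists e, P (rcons l e).
  move=> l Pl; apply: contrapT => H.
  have H' : forall e, finite_set (Fl (rcons l e)).
    by move=> e; apply: contrapT => ne; apply: H; exists e.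
  apply: Pl.
  pose y := last x (map s l).
  apply: (@sub_finite_set _ _ ([set (x, l)] `|` \bigcup_(e in [set e | r e = y]) Fl (rcons l e))).
    move=> p [Fp [rest ep]]; case: rest ep => [|e rest] ep.
      by left; rewrite /set1 /= [p]surjective_pairing ep cats0 -Fp.1.
    right; exists e.
      move: Fp => [Fp1 [okp _]]; move: okp; rewrite /ok_path ep (_ : p.1 = x) // chain_cat.
      by case/andP => _ /= /andP [/eqP].
    by split => //; exists rest; rewrite ep cat_rcons.
  rewrite finite_setU; split; first exact: finite_set1.
  apply: bigcup_finite; first exact: (Hrf y).1.
  by move=> e _; exact: H'.
pose nxt l := match pselect (exists e, P (rcons l e)) with
              | left H => proj1_sig (cid H) | right _ => e0 end.
have nxtP : forall l, P l -> P (rcons l (nxt l)).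
  move=> l Pl; rewrite /nxt; case: pselect => [H|H].
    exact: (proj2_sig (cid H)).
  by case: H; apply: step.
pose lseq n := iter n (fun l => rcons l (nxt l)) [::].
pose eta n := nxt (lseq n).
have lseqE : forall n, lseq n = seg eta 0 n.
  elim => // n IH; rewrite /lseq iterS -/(lseq n).
  have -> : nxt (lseq n) = eta n by [].
  by rewrite IH /seg -/(mkseq eta n) -/(mkseq eta n.+1) mkseqS.
have PL : forall n, P (seg eta 0 n).
  move=> n; rewrite -lseqE; elim: n => // n IH.
  by rewrite /lseq iterS -/(lseq n); apply: nxtP.
have ch : forall n, chain r s x (seg eta 0 n).
  move=> n; have [p [Flp _]] := Pext _ (PL n); exact: Flchain Flp.
have r0 : r (eta 0%N) = x.
  by have := ch 1%N; rewrite /= andbT => /eqP.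
have okE : ok_ipath r s eta.
  move=> n; have := ch n.+2.
  rewrite (@seg0_split eta n n.+2 (leq_trans (leqnSn n) (leqnSn n.+1))).
  have -> : (n.+2 - n = 2)%N by lia.
  by rewrite chain_cat /= => /and3P [_ _ /andP [/eqP]].
have gx : actV g x = x.
  have [p [[[Fp1 [_ [[sf _] _]]] _] _]] := Pext _ P0.
  by move: (congr1 fst sf); rewrite /= -Fp1.
have nsf : forall n, ~ strongly_fixed actV actE phi g (x, seg eta 0 n).
  move=> n; have [p [[[Fp1 [_ [_ mn]]] [rest ep]] lt]] := Pext _ (PL n).
  rewrite size_seg in lt; move: (mn n lt); rewrite ep take_size_cat ?size_seg //.
  by rewrite -Fp1.
have iZ0 : forall z, r (z 0%N) = x -> inZ r (x, [::]) z by move=> z z0; split.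
have okT : forall h, actV h x = x -> ok_selem r s actV ((x, [::]), h, (x, [::])).
  by move=> h hx; split => //; split => //; rewrite /fp_s /= hx.
pose t : grep G V Ed := (((x, [::]), g, (x, [::])), eta).
pose u : grep G V Ed := (((x, [::]), 1, (x, [::])), eta).
have vt : valid_grep r s actV t by split; [exact: (okT _ gx) | split => //; exact: iZ0].
have vu : valid_grep r s actV u by split; [exact: (okT _ (actV1 x)) | split => //; exact: iZ0].
have ngu : ~ germ_eq r s actV actE phi t u.
  move/(germ_eqP _ vt) => [_ [q]].
  change (lev ((x,[::]), g, (x,[::])) eta q = lev ((x,[::]), 1, (x,[::])) eta q -> False).
  rewrite !(levF _ _ (iZ0 _ r0) (leq0n q)) /= subn0 aseq1 pseq1 => -[E1 E2].
  by apply: (nsf q); split; rewrite /act_path /phi_path /= ?gx ?E1 ?E2.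
have [U [W [oU oW Ut Wu UW]]] := Haus t u vt vu ngu.
case: oU => _ /(_ t Ut) [st [gam [ost [ogam [bt sU]]]]].
case: oW => _ /(_ u Wu) [su [gam' [osu [ogam' [bu sW]]]]].
move: bt => /basic_elim [_ [xi1 [vs1 [ig1 [e1 [p1 E1]]]]]].
move: bu => /basic_elim [_ [xi2 [vs2 [ig2 [e2 [p2 E2]]]]]].
rewrite /= in e1 e2; subst xi1 xi2.
pose n := (maxn (maxn p1 p2) (maxn (maxn (size gam.2) (size gam'.2))
                                    (maxn (size st.2.2) (size su.2.2)))).+1.
have [p [[[Fp1 [okp [sfp _]]] [rest ep]] lt]] := Pext _ (PL n).
rewrite size_seg in lt.
have okp' : chain r s x p.2 by move: okp; rewrite /ok_path -Fp1.
have [zeta [okz [z0 sz]]] := ext_path okp'.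
have ag : forall i, (i < n)%N -> zeta i = eta i.
  move=> i il; rewrite -(nth_seg (zeta 0%N) zeta 0 (leq_trans il (ltnW lt))) sz ep.
  by rewrite nth_cat size_seg il nth_seg.
have ag' : forall m, (m < n)%N -> forall i, (i <= m)%N -> eta i = zeta i.
  by move=> m mn i im; rewrite ag // (leq_ltn_trans im mn).
have agl : forall m, (m < n)%N -> forall i, (i < m)%N -> eta i = zeta i.
  by move=> m mn i im; rewrite ag // (ltn_trans im mn).
pose v : grep G V Ed := (t.1, zeta).
have vv : valid_grep r s actV v by split; [exact: vt.1 | split => //; exact: iZ0].
have Uv : U v.
  apply: sU; split => //; exists zeta; split.
    split; first exact: ost.
    split => //; apply: (inZ_agree vs1.2.2); apply: ag'; rewrite /n /=; lia.
  split; first by apply: (inZ_agree ig1); apply: ag'; rewrite /n /=; lia.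
  apply/(germ_eqP _ vv); split => //; exists p1.
  have H0 : r (eta 0%N) = r (zeta 0%N) by rewrite r0 z0.
  have Ha1 : forall i, (i < p1)%N -> eta i = zeta i by apply: agl; rewrite /n /=; lia.
  change (lev t.1 zeta p1 = lev st zeta p1).
  by rewrite -(lev_local _ H0 Ha1) -(lev_local _ H0 Ha1).
have Wv : W v.
  apply: sW; split => //; exists zeta; split.
    split; first exact: osu.
    split => //; apply: (inZ_agree vs2.2.2); apply: ag'; rewrite /n /=; lia.
  split; first by apply: (inZ_agree ig2); apply: ag'; rewrite /n /=; lia.
  apply/(germ_eqP _ vv); split => //; exists (size p.2).
  change (lev t.1 zeta (size p.2) = lev su zeta (size p.2)).
  have E2' : lev u.1 zeta p2 = lev su zeta p2.
    have H0 : r (eta 0%N) = r (zeta 0%N) by rewrite r0 z0.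
    have Ha2 : forall i, (i < p2)%N -> eta i = zeta i by apply: agl; rewrite /n /=; lia.
    by rewrite -(lev_local _ H0 Ha2) -(lev_local _ H0 Ha2).
  have izs : inZ r su.2 zeta by apply: (inZ_agree vs2.2.2); apply: ag'; rewrite /n /=; lia.
  have esu : su = (su.1.1, su.1.2, su.2) by rewrite -!surjective_pairing.
  rewrite esu in E2' *.
  have p2q : (p2 <= size p.2)%N by move: lt; rewrite /n /=; lia.
  rewrite -(lev_up (iZ0 _ z0) izs E2' p2q).
  change (lev ((x,[::]), g, (x,[::])) zeta (size p.2) = lev ((x,[::]), 1, (x,[::])) zeta (size p.2)).
  rewrite !(levF _ _ (iZ0 _ z0) (leq0n _)) /= subn0 sz aseq1 pseq1.
  case: sfp => E3 E4; move: (congr1 snd E3) => /= ->; by rewrite -E4.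
have : (U `&` W) v by split.
by rewrite UW.
Qed.

End Pf.

Theorem theorem4p2 (G : groupType) (V Ed : countType) (r s : Ed -> V)
    (actV : G -> V -> V) (actE : G -> Ed -> Ed) (phi : G -> Ed -> G) :
  row_finite_no_sources r ->
  graph_action r s actV actE ->
  cocycle actE phi ->
  cocycle_vertex_cond actV phi ->
  (finitely_many_minimal_strongly_fixed r s actV actE phi <->
   tight_groupoid_hausdorff r s actV actE phi).
Proof.
move=> Hrf Hga Hco Hcv; split.
  exact: dir12.
exact: dir21.
Qed.
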